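(* Let $A$ be a commutative ring, $a\in A$ a non-zero-divisor, and $\mathcal D=\partial_z-a:A[z]\to A[z]$, $h\mapsto h'-ah$. Let $f=b_0+b_1z+\cdots+b_dz^d\in A[z]$ with $b_0,\ldots,b_d\in A$. (i) If $f\in\mathrm{Im}\,\mathcal D$, then $b_d\equiv 0\pmod{a}$ and $$d!\,b_d+(d-1)!\,b_{d-1}a+(d-2)!\,b_{d-2}a^2+\cdots+0!\,b_0a^d\equiv 0\pmod{a^{d+1}}.$$ (ii) Conversely, suppose $A$ is either a $\mathbb Q$-algebra, or an $\mathbb F_p$-algebra with $d<p$. If $f$ satisfies the congruence $\sum_{j=0}^{d}(d-j)!\,b_{d-j}a^{j}\equiv 0\pmod{a^{d+1}}$, then $f\in\mathrm{Im}\,\mathcal D$.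
   Context: Congruences are in $A$: $x\equiv 0\pmod{a^k}$ means $x\in Aa^k$. *)

(* Defs.v *)
From HB Require Import structures.
From mathcomp Require Import all_boot all_order all_algebra.
Set Implicit Arguments. Unset Strict Implicit. Unset Printing Implicit Defensive.
Import Order.TTheory GRing.Theory Num.Theory.
Local Open Scope ring_scope.

Definition non_zero_divisor (A : comNzRingType) (a : A) : Prop :=
  forall x : A, a * x = 0 -> x = 0.

Definition Dop (A : comNzRingType) (a : A) (h : {poly A}) : {poly A} :=
  h^`() - a%:P * h.

Definition cong0 (A : comNzRingType) (a : A) (k : nat) (x : A) : Prop :=
  exists c : A, x = c * a ^+ k.

(* A is a Q-algebra: every positive integer is invertible in A
   (equivalently, the unique ring map Z -> A extends to Q). *)
Definition is_Qalgebra (A : comNzRingType) : Prop :=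
  forall n : nat, exists y : A, y * (n.+1)%:R = 1.

Definition is_Fp_algebra (A : comNzRingType) (p : nat) : Prop :=
  prime p /\ (p%:R : A) = 0.

(* Main.v *)
Require Import Defs.
From HB Require Import structures.
From mathcomp Require Import all_boot all_order all_algebra.
From Stdlib Require Import ClassicalEpsilon.
Import GRing.Theory.
Local Open Scope ring_scope.

Lemma key (A : comNzRingType) (a : A) (d : nat) (f : {poly A}) (g : nat -> A) :
 (forall k, (k < d)%N -> f`_k = (k.+1)%:R * g k.+1 - a * g k) ->
 \sum_(j < d.+1) ((d - j)`!)%:R * f`_(d - j) * a ^+ j =
 (d`!)%:R * g d * a - g 0%N * a ^+ d.+1 + (d`!)%:R * f`_d.
Proof.
move=> Hf.
rewrite -(big_mkord xpredT (fun j => ((d - j)`!)%:R * f`_(d - j) * a ^+ j)).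
rewrite big_nat_rev /=.
have -> : \sum_(0 <= i < d.+1) ((d - (0 + d.+1 - i.+1))`!)%:R * f`_(d - (0 + d.+1 - i.+1)) * a ^+ (0 + d.+1 - i.+1)
  = \sum_(0 <= k < d.+1) (k`!)%:R * f`_k * a ^+ (d - k).
  apply: eq_big_nat => k /andP[_ hk]; by rewrite add0n subSS subKn.

rewrite big_nat_recr; last by [].
rewrite subnn expr0 mulr1 /=.
congr (_ + _).
rewrite (telescope_sumr_eq (fun k => (k`!)%:R * g k * a ^+ (d.+1 - k))); last first.
  move=> k /andP[_ hk]; rewrite Hf // subSS (subSn (ltnW hk)) exprS factS natrM.
  rewrite mulrBr mulrBl; congr (_ - _).
    by rewrite !mulrA [_ * k.+1%:R]mulrC.
  by rewrite -!mulrA; congr (_ * _); rewrite mulrCA.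
  by [].

by rewrite subSn // subnn expr1 subn0 fact0 mul1r.
Qed.

Lemma coefDop (A : comNzRingType) (a : A) (h : {poly A}) k :
  (Dop a h)`_k = k.+1%:R * h`_k.+1 - a * h`_k.
Proof. by rewrite /Dop coefB coef_deriv coefCM mulr_natl. Qed.

Lemma inv_fact (A : comNzRingType) d :
  (forall n, (n < d)%N -> exists y : A, y * n.+1%:R = 1) ->
  exists y : A, y * (d`!)%:R = 1.
Proof.
elim: d => [|d IH] H; first by exists 1; rewrite fact0 mul1r.
have [y Hy] := IH (fun n hn => H n (ltnW hn)).
have [z Hz] := H d (ltnSn d).
exists (z * y); rewrite factS natrM mulrACA Hz Hy mulr1 //.
Qed.

Lemma inv_Fp (A : comNzRingType) p k :
  prime p -> (p%:R : A) = 0 -> (0 < k)%N -> (k < p)%N ->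
  exists y : A, y * k%:R = 1.
Proof.
move=> pp p0 k0 kp.
have cop : coprime p k.
  rewrite prime_coprime //; apply/negP => /dvdn_leq => /(_ k0).
  by rewrite leqNgt kp.
have [x _ Hx] := Bezoutl k (prime_gt0 pp).
move: Hx; rewrite (eqP cop) => /dvdnP [q Hq].
have H1 : (1 : A) + x%:R * k%:R = 0.
  have : (((1 + x * k)%N)%:R : A) = 0 by rewrite Hq natrM p0 mulr0.
  by rewrite natrD natrM.
exists (- x%:R); rewrite mulNr.
by move/eqP: H1; rewrite addr_eq0 => /eqP H1.
Qed.

Fixpoint gs (A : comNzRingType) (inv : nat -> A) (f : {poly A}) (a c : A) (k : nat) : A :=
  match k with
  | 0 => - c
  | k'.+1 => inv k' * (f`_k' + a * gs A inv f a c k')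
  end.

Theorem proposition2p10 (A : comNzRingType) (a : A)
  (ha : non_zero_divisor a) (d : nat) (f : {poly A})
  (hf : (size f <= d.+1)%N) :
  ((exists h : {poly A}, f = Dop a h) ->
     cong0 a 1 f`_d /\
     cong0 a d.+1 (\sum_(j < d.+1) ((d - j)`!)%:R * f`_(d - j) * a ^+ j))
  /\
  ((is_Qalgebra A \/ (exists p : nat, is_Fp_algebra A p /\ (d < p)%N)) ->
     cong0 a d.+1 (\sum_(j < d.+1) ((d - j)`!)%:R * f`_(d - j) * a ^+ j) ->
     exists h : {poly A}, f = Dop a h).
Proof.
split.
  move=> [h Eh].
  have Hc : forall k, f`_k = k.+1%:R * h`_k.+1 - a * h`_k by move=> k; rewrite Eh coefDop.
  have sh : (size h <= d.+1)%N.
    rewrite leqNgt; apply/negP => hs.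
    have hk := Hc (size h).-1.
    have h0 : h != 0 by rewrite -size_poly_gt0 (leq_trans _ hs).
    have e1 : f`_(size h).-1 = 0.
      by apply: nth_default; apply: leq_trans hf _; rewrite -ltnS prednK // size_poly_gt0.
    have e2 : h`_(size h).-1.+1 = 0 by apply: nth_default; rewrite prednK // size_poly_gt0.
    rewrite e1 e2 mulr0 sub0r in hk.
    have : a * lead_coef h = 0 by rewrite lead_coefE -[a * _]opprK -hk oppr0.
    move/ha/eqP; rewrite lead_coef_eq0; exact/negP.
  have hd1 : h`_d.+1 = 0 by apply: nth_default.
  have fd : f`_d = - a * h`_d by rewrite Hc hd1 mulr0 sub0r mulNr.
  split; first by exists (- h`_d); rewrite fd expr1 mulNr mulNr mulrC.
  exists (- h`_0).
  rewrite (@key A a d f (fun k => h`_k)); last by move=> k _; apply: Hc.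
  rewrite fd mulNr mulrN.
  by rewrite [a * _]mulrC mulrA addrAC subrr add0r mulNr.
move=> Halg [c Hc].
have Hinv : forall n, (n < d)%N -> exists y : A, y * n.+1%:R = 1.
  move=> n hn; case: Halg => [HQ | [p [[pp p0] dp]]]; first exact: HQ.
  exact: (@inv_Fp A _ _ pp p0 (ltn0Sn n) (leq_ltn_trans hn dp)).
have Hex : forall n, exists y : A, (n < d)%N -> y * n.+1%:R = 1.
  move=> n; case: (ltnP n d) => hn; last by exists 0.
  by have [y Hy] := Hinv n hn; exists y.
have [inv Hi] : exists inv : nat -> A, forall n, (n < d)%N -> inv n * n.+1%:R = 1.
  exists (fun n => proj1_sig (constructive_indefinite_description _ (Hex n))).
  move=> n; exact: (proj2_sig (constructive_indefinite_description _ (Hex n))).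
pose g := @gs A inv f a c.
have Hf : forall k, (k < d)%N -> f`_k = k.+1%:R * g k.+1 - a * g k.
  move=> k hk; rewrite /g /= mulrA [_ * inv k]mulrC Hi // mul1r addrK //.
have E := @key A a d f g Hf.
rewrite E /g /= in Hc.
have [y Hy] := @inv_fact A d Hinv.
have fd : f`_d = - a * g d.
  move/eqP: Hc; rewrite mulNr opprK addrAC -subr_eq0 addrK addr_eq0 -/g => /eqP H0.
  rewrite -[f`_d]mul1r -Hy -mulrA -(opprK (d`!%:R * f`_d)) -H0 mulrN !mulrA Hy mul1r mulNr [_ * a]mulrC //.
exists (\poly_(i < d.+1) g i).
apply/polyP => k; rewrite coefDop !coef_poly.
case: (ltngtP k d) => hk.
- by rewrite ltnS hk ltnW // Hf.
- have h1 : (k.+1 < d.+1)%N = false by rewrite ltnS leqNgt ltnW.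
  have h2 : (k < d.+1)%N = false by rewrite ltnS leqNgt hk.
  rewrite h1 h2 !mulr0 subrr.
  by apply: nth_default; apply: leq_trans hf _.
- by rewrite hk ltnn leqnn mulr0 sub0r fd mulNr.
Qed.
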